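(* Let $\varphi_1$ and $\varphi_2$ be two $\mathbb{T}$-gains on a connected graph $G$ with $n$ vertices and $m$ edges. If $\varphi_1(\overrightarrow{C_k(T)})=\varphi_2(\overrightarrow{C_k(T)})$ for $k=1,\dots,m-n+1$ holds for one normal spanning tree $T$ of $G$, then the same equalities hold for the directed fundamental cycles of any normal spanning tree of $G$.
   Context: Graphs are finite, simple and undirected. $\mathbb{T}=\{z\in\mathbb{C}:|z|=1\}$. Each edge $e_{st}$ of $G$ gives two oriented edges $\overrightarrow{e_{st}}$ and $\overrightarrow{e_{ts}}$. A $\mathbb{T}$-gain on $G$ is a map $\varphi$ from oriented edges to $\mathbb{T}$ with $\varphi(\overrightarrow{e_{ts}})=\varphi(\overrightarrow{e_{st}})^{-1}$. The gain of a directed cycle is the product of the gains of its oriented edges. A rooted spanning tree $T$ with root $v_r$ induces the tree order: $v_x\le v_y$ iff $v_x$ lies on the path in $T$ from $v_r$ to $v_y$; $T$ is a normal spanning tree if any two adjacent vertices of $G$ are comparable. The suitably oriented graph $\overrightarrow{G_T}$ orients each edge $e_{st}$ with $v_s\le v_t$ as $\overrightarrow{e_{st}}$ if $e_{st}\in E(T)$ and as $\overrightarrow{e_{ts}}$ otherwise. Each of the $m-n+1$ non-tree edges creates a unique (fundamental) cycle with $T$, which is a directed cycle $\overrightarrow{C_k(T)}$ in $\overrightarrow{G_T}$ (directed fundamental cycles). *)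

(* Defs.v *)
From HB Require Import structures.
From mathcomp Require Import all_boot all_order all_algebra.
From mathcomp Require Import complex.
From mathcomp Require Import reals.
Set Implicit Arguments. Unset Strict Implicit. Unset Printing Implicit Defensive.
Import Order.TTheory GRing.Theory Num.Theory.
Local Open Scope ring_scope.

Definition simple_graph (V : finType) (adj : rel V) : Prop :=
  symmetric adj /\ irreflexive adj.

Definition connected_graph (V : finType) (adj : rel V) : Prop :=
  forall x y : V, connect adj x y.

(* A T-gain with values in the unit circle of C = R[i]; the oriented edge
   (u -> v) of an edge {u,v} receives gain [phi u v]. Values of [phi] on
   non-adjacent pairs are irrelevant. *)
Definition T_gain (R : realType) (V : finType) (adj : rel V)
    (phi : V -> V -> R[i]) : Prop :=
  forall u v, adj u v -> `|phi u v| = 1 /\ phi v u = (phi u v)^-1.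

Definition acyclic (V : finType) (t : rel V) : Prop :=
  forall c : seq V, uniq c -> (3 <= size c)%N -> ~~ cycle t c.

Definition spanning_tree (V : finType) (adj : rel V) (t : rel V) : Prop :=
  [/\ subrel t adj, symmetric t, (forall x y : V, connect t x y) & acyclic t].

Definition tree_le (V : finType) (t : rel V) (r x y : V) : Prop :=
  exists p : seq V, [/\ path t r p, last r p = y, uniq (r :: p) & x \in r :: p].

Definition normal_spanning_tree (V : finType) (adj : rel V) (t : rel V) (r : V)
  : Prop :=
  spanning_tree adj t /\
  forall x y, adj x y -> tree_le t r x y \/ tree_le t r y x.

Fixpoint walk_gain (R : realType) (V : Type) (phi : V -> V -> R[i])
    (x : V) (p : seq V) : R[i] :=
  if p is y :: p' then phi x y * walk_gain phi y p' else 1.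

Definition cycle_gain (R : realType) (V : Type) (phi : V -> V -> R[i])
    (x : V) (p : seq V) : R[i] :=
  walk_gain phi x (rcons p x).

(* The directed fundamental cycles of the rooted spanning tree (t, r) in the
   suitably oriented graph: for a non-tree edge {u,v} with u <= v in the tree
   order, the cycle is  u -> (tree path down to v) -> v -> u,  where tree edges
   are oriented from smaller to larger and the non-tree edge from v to u.
   [same_fundamental_cycle_gains] says phi1 and phi2 give equal gains to all
   of them. *)
Definition same_fundamental_cycle_gains (R : realType) (V : finType)
    (adj : rel V) (t : rel V) (r : V) (phi1 phi2 : V -> V -> R[i]) : Prop :=
  forall u v : V, adj u v -> ~~ t u v -> tree_le t r u v ->
  forall p : seq V, path t u p -> last u p = v -> uniq (u :: p) ->
    cycle_gain phi1 u p = cycle_gain phi2 u p.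

(* Main.v *)
Require Import Defs.
From HB Require Import structures.
From mathcomp Require Import all_boot all_order all_algebra.
From mathcomp Require Import complex.
From mathcomp Require Import reals.
From mathcomp Require Import zify.
Set Implicit Arguments. Unset Strict Implicit. Unset Printing Implicit Defensive.
Import Order.TTheory GRing.Theory Num.Theory.
Local Open Scope ring_scope.

Lemma wg_cat (R : realType) (V : Type) (phi : V -> V -> R[i]) x p q :
  walk_gain phi x (p ++ q) = walk_gain phi x p * walk_gain phi (last x p) q.
Proof. by elim: p x => [|y p IH] x /=; rewrite ?mul1r // IH mulrA. Qed.

Lemma wg_rcons (R : realType) (V : Type) (phi : V -> V -> R[i]) x p y :
  walk_gain phi x (rcons p y) = walk_gain phi x p * phi (last x p) y.
Proof. by rewrite -cats1 wg_cat /= mulr1. Qed.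

Lemma wg_nz (R : realType) (V : Type) (e : rel V) (phi : V -> V -> R[i]) x p :
  (forall a b, e a b -> phi a b != 0) -> path e x p -> walk_gain phi x p != 0.
Proof.
move=> nz; elim: p x => [|y p IH] x /=; first by rewrite oner_eq0.
by case/andP=> exy hp; rewrite mulf_neq0 ?nz ?IH.
Qed.

Lemma wg_ratio (R : realType) (V : Type) (e : rel V) (phi1 phi2 : V -> V -> R[i]) x p :
  (forall a b, e a b -> phi2 a b != 0) -> path e x p ->
  walk_gain phi1 x p =
  walk_gain phi2 x p * walk_gain (fun a b => phi1 a b / phi2 a b) x p.
Proof.
move=> nz; elim: p x => [|y p IH] x /=; first by rewrite mulr1.
case/andP=> exy hp; rewrite IH //.
have := nz _ _ exy => h.
by rewrite [RHS]mulrACA [phi2 x y * _]mulrC divfK.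
Qed.

Lemma not_uniq_split (T : eqType) (l : seq T) :
  ~~ uniq l -> exists s1 z s2 s3, l = s1 ++ z :: s2 ++ z :: s3.
Proof.
elim: l => [|y l IH] //=. rewrite negb_and negbK; case/orP.
  by case/splitPr=> s2 s3; exists [::], y, s2, s3.
by move/IH => [s1 [z [s2 [s3 ->]]]]; exists (y :: s1), z, s2, s3.
Qed.

Lemma closed_split (T : eqType) (x : T) c :
  ~~ uniq (x :: c) -> exists w1 z w2 w3, rcons c x = w1 ++ w2 ++ w3 /\
   last x w1 = z /\ last z w2 = z /\ (0 < size w2)%N /\ (0 < size w3)%N.
Proof.
move/not_uniq_split => [[|y s1] [z [s2 [s3 E]]]].
  case: E => -> ->; exists [::], z, (rcons s2 z), (rcons s3 z).
  rewrite !last_rcons !size_rcons; split=> //.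
  by rewrite -!cats1 /= -!catA /=.
case: E => -> ->; exists (rcons s1 z), z, (rcons s2 z), (rcons s3 y).
rewrite !last_rcons !size_rcons; split=> //.
by rewrite -!cats1 -!catA /= -?catA /= -?catA.
Qed.

Lemma closed_walk (R : realType) (V : finType) (t : rel V) (rho : V -> V -> R[i]) :
  irreflexive t -> acyclic t -> (forall a b, t a b -> rho a b * rho b a = 1) ->
  forall n x w, (size w <= n)%N -> path t x w -> last x w = x ->
  walk_gain rho x w = 1.
Proof.
move=> tirr tac hinv; elim=> [|n IH] x w.
  by case: w.
case/lastP: w => [|c y] //; rewrite last_rcons => hs hp hy; subst y.
case Hu: (uniq (x :: c)).
  case: c Hu hs hp => [|y [|y' c]] Hu hs hp.
  - by move: hp; rewrite /= tirr.
  - by move: hp => /= /andP[hxy /andP[hyx _]]; rewrite mulr1 hinv.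
  - by move: (tac _ Hu isT); rewrite /cycle hp.
move/negbT: Hu => /closed_split [w1 [z [w2 [w3 [E [h1 [h2 [s2 s3]]]]]]]].
move: hs hp; rewrite E size_cat size_cat => hs.
rewrite !cat_path h1 h2 => /and3P[p1 p2 p3].
have l3 : last z w3 = x.
  by have := last_rcons x c x; rewrite E !last_cat h1 h2.
rewrite !wg_cat h1 h2 (IH z w2) ?mul1r //; last first.
  rewrite -ltnS (leq_trans _ hs) // addnCA -addn1 leq_add2l addn_gt0.
  by rewrite s3 orbT.
rewrite -h1 -wg_cat (IH x) //.
- rewrite size_cat -ltnS (leq_trans _ hs) // -addnS leq_add2l.
  by rewrite addnC -addn1 leq_add2l.
- by rewrite cat_path h1 p1 p3.
- by rewrite last_cat h1.
Qed.

Theorem corollary3p1 (R : realType) (V : finType) (adj : rel V)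
  (phi1 phi2 : V -> V -> R[i]) :
  simple_graph adj -> connected_graph adj ->
  T_gain adj phi1 -> T_gain adj phi2 ->
  (exists (t : rel V) (r : V), normal_spanning_tree adj t r /\
      same_fundamental_cycle_gains adj t r phi1 phi2) ->
  forall (t' : rel V) (r' : V), normal_spanning_tree adj t' r' ->
      same_fundamental_cycle_gains adj t' r' phi1 phi2.
Proof.
move=> [adj_sym adj_irr] _ H1 H2 [t [r [[[tadj tsym tconn tac] tnorm] Hsame]]].
move=> t' r' [[t'adj _ _ _] _].
pose rho := fun a b => phi1 a b / phi2 a b.
pose G := walk_gain rho.
have nz1 : forall a b, adj a b -> phi1 a b != 0.
  move=> a b /H1 [h _]; apply/eqP => e; move: h; rewrite e normr0 => /eqP.
  by rewrite eq_sym oner_eq0.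
have nz2 : forall a b, adj a b -> phi2 a b != 0.
  move=> a b /H2 [h _]; apply/eqP => e; move: h; rewrite e normr0 => /eqP.
  by rewrite eq_sym oner_eq0.
have rnz : forall a b, adj a b -> rho a b != 0.
  by move=> a b ab; rewrite /rho mulf_neq0 ?invr_eq0 ?nz1 ?nz2.
have rhoK : forall a b, adj a b -> rho a b * rho b a = 1.
  move=> a b ab; rewrite /rho (H1 _ _ ab).2 (H2 _ _ ab).2 invrK.
  by rewrite mulrACA divff ?mulVf ?nz1 ?nz2 ?mulr1.
have tirr : irreflexive t by move=> x; apply/negP => /tadj; rewrite adj_irr.
have Hcl := closed_walk tirr tac (fun a b ab => rhoK a b (tadj a b ab)).
have Gnz : forall x p, path adj x p -> G x p != 0.
  by move=> x p; apply: wg_nz.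
have E : forall b, exists p : seq V, path t b p && (last b p == r).
  by move=> b; case/connectP: (tconn b r) => p hp ->; exists p; rewrite hp eqxx.
pose f := fun b => (G b (xchoose (E b)))^-1.
have Hf : forall q, path t r q -> G r q = f (last r q).
  move=> q hq; set b := last r q; have /andP[hP /eqP lP] := xchooseP (E b).
  have := Hcl (size (q ++ xchoose (E b))) r (q ++ xchoose (E b)) (leqnn _).
  rewrite cat_path hq hP last_cat lP => /(_ isT erefl).
  by rewrite /G wg_cat -/b => /mulr1_eq h; rewrite /f /G /= -h invrK.
have Hnt : forall a b, adj a b -> ~~ t a b -> tree_le t r a b ->
    f b = f a * rho a b.
  move=> a b ab nab Hle; have [p0 [Hp0 Hl0 Hu0 Ha]] := Hle.
  move: Hp0 Hl0 Hu0; case/splitPl: Ha => p1 p2 Ha1.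
  rewrite cat_path Ha1 => /andP[Hp1 Hp2]; rewrite last_cat Ha1 => Hl2.
  rewrite -cat_cons cat_uniq => /and3P[_ Hnh Hu2].
  have Hu : uniq (a :: p2).
    rewrite /= Hu2 andbT; apply: contra Hnh => ap2; apply/hasP; exists a => //.
    by rewrite -Ha1 mem_last.
  have := Hsame a b ab nab Hle p2 Hp2 Hl2 Hu; rewrite /cycle_gain.
  have hpa : path adj a (rcons p2 a).
    by rewrite rcons_path (sub_path tadj Hp2) Hl2 adj_sym.
  rewrite (wg_ratio phi1 nz2 hpa) -{2}[walk_gain phi2 a _]mulr1.
  move/(mulfI (wg_nz nz2 hpa)); rewrite wg_rcons Hl2 => hc.
  have -> : f b = f a * G a p2.
    have hp12 : path t r (p1 ++ p2) by rewrite cat_path Hp1 Ha1.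
    have := Hf _ hp12; rewrite last_cat Ha1 Hl2 => <-.
    by rewrite /G wg_cat -/G (Hf p1 Hp1) Ha1.
  have hG : G a p2 = rho a b.
    have hba : adj b a by rewrite adj_sym.
    have e1 := rhoK b a hba.
    rewrite /G in hc *; rewrite -[LHS]mulr1 -e1 mulrA hc mul1r //.
  by rewrite hG.
have Hedge : forall a b, adj a b -> f b = f a * rho a b.
  move=> a b ab; case: (boolP (t a b)) => tab.
    case/connectP: (tconn r a) => q hq ha.
    have hq' : path t r (rcons q b) by rewrite rcons_path hq -ha tab.
    by have := Hf _ hq'; rewrite last_rcons /G wg_rcons -ha => <-; rewrite -/G (Hf q hq) -ha.
  case: (tnorm a b ab) => le; first exact: (Hnt a b ab tab le).
  have ba : adj b a by rewrite adj_sym.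
  have nba : ~~ t b a by rewrite tsym.
  by rewrite (Hnt b a ba nba le) -mulrA (rhoK b a ba) mulr1.
have Hwalk : forall x q, path adj x q -> G x q * f x = f (last x q).
  move=> x q; elim: q x => [|y q IH] x /=; first by rewrite mul1r.
  case/andP=> xy hq; rewrite -mulrA mulrCA (mulrC (rho x y)) -(Hedge x y xy).
  exact: (IH y hq).
move=> u v Huv Hnt' Hle p Hp Hlast Hup.
have hpa : path adj u (rcons p u).
  by rewrite rcons_path (sub_path t'adj Hp) Hlast adj_sym.
have fnz : f u != 0.
  by rewrite /f invr_eq0 Gnz // (sub_path tadj); have /andP[] := xchooseP (E u).
have HG : G u (rcons p u) = 1.
  by apply: (mulIf fnz); rewrite Hwalk // last_rcons mul1r.
by rewrite /cycle_gain (wg_ratio phi1 nz2 hpa) -/G HG mulr1.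
Qed.
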